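(* Let $X$, $Y$ be disjoint countable sets of cardinality at least two, and let $M\le\mathrm{Sym}(X)$ and $N\le\mathrm{Sym}(Y)$ be nontrivial closed permutation groups. Then either $|M\boxtimes N|\le\aleph_0$ or $|M\boxtimes N| = 2^{\aleph_0}$, with the former holding if and only if $M$ and $N$ are semi-regular.
   Context: Closed means closed in the permutation topology (pointwise convergence) of $\mathrm{Sym}(X)$, resp. $\mathrm{Sym}(Y)$. A permutation group is semi-regular if all point stabilisers are trivial. Let $T$ be the $(|X|,|Y|)$-biregular tree with natural bipartition $VT=V_X\sqcup V_Y$ (vertices in $V_X$ have valency $|X|$, in $V_Y$ valency $|Y|$). $A(v)$, $\overline{A}(v)$ are the sets of arcs with origin, resp. terminus, $v$. A legal colouring is a map $c:AT\to X\cup Y$ restricting to a bijection $A(v)\to X$ for $v\in V_X$, to a bijection $A(v)\to Y$ for $v\in V_Y$, and constant on each $\overline{A}(v)$. $U_c(M,N)$ is the group of $g\in\mathrm{Aut}(T)$ with $gV_X=V_X$ and $c|_{A(gv)}\circ g|_{A(v)}\circ(c|_{A(v)})^{-1}$ in $M$ for $v\in V_X$ and in $N$ for $v\in V_Y$. The box product $M\boxtimes N\le\mathrm{Sym}(V_Y)$ is the group induced on $V_Y$ by $U_c(M,N)$. *)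

(* Defs.v *)
From mathcomp Require Import all_boot.
From mathcomp Require Import boolp classical_sets functions cardinality.
Set Implicit Arguments. Unset Strict Implicit. Unset Printing Implicit Defensive.
Local Open Scope classical_set_scope.

Definition perm_group (X : Type) (M : set (X -> X)) : Prop :=
  [/\ (forall m, M m -> bijective m),
      M id,
      (forall m n, M m -> M n -> M (m \o n)) &
      (forall m mi, M m -> cancel m mi -> cancel mi m -> M mi)].

(* Closed in the permutation topology (pointwise convergence) of Sym(X):
   every permutation f all of whose basic neighbourhoods
   { g | g agrees with f on a finite set s } meet M lies in M. *)
Definition perm_closed (X : eqType) (M : set (X -> X)) : Prop :=
  forall f : X -> X, bijective f ->
    (forall s : seq X, exists2 m, M m & forall x, x \in s -> m x = f x) ->
    M f.

Definition nontrivial_group (X : Type) (M : set (X -> X)) : Prop :=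
  exists2 m, M m & exists x, m x <> x.

Definition semiregular (X : Type) (M : set (X -> X)) : Prop :=
  forall m, M m -> forall x, m x = x -> m = id.

Fixpoint is_walk (V : Type) (adj : V -> V -> Prop) (p : seq V) : Prop :=
  match p with
  | u :: ((v :: _) as q) => adj u v /\ is_walk adj q
  | _ => True
  end.

Fixpoint no_backtrack (V : Type) (p : seq V) : Prop :=
  match p with
  | u :: ((_ :: w :: _) as q) => u <> w /\ no_backtrack q
  | _ => True
  end.

Definition is_tree (V : Type) (adj : V -> V -> Prop) : Prop :=
  [/\ (exists v : V, True),
      (forall u v, adj u v -> adj v u),
      (forall u, ~ adj u u),
      (forall u v, exists p : seq V, is_walk adj (u :: p) /\ last u p = v) &
      (forall (u : V) (p : seq V), is_walk adj (u :: p) -> no_backtrack (u :: p) ->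
          last u p = u -> p = [::])].

(* The (|X|,|Y|)-biregular tree with natural bipartition VT = V_X ⊔ V_Y
   (v ∈ V_X iff inX v), together with a legal colouring c : AT -> X ⊔ Y
   (c u v is the colour of the arc (u,v); it is meaningful only when adj u v).
   The valencies |X|, |Y| are enforced by the bijectivity conditions. *)
Definition legal_coloured_biregular_tree (X Y V : Type)
  (adj : V -> V -> Prop) (inX : V -> bool) (c : V -> V -> X + Y) : Prop :=
  [/\ is_tree adj,
      (forall u v, adj u v -> inX u <> inX v),
      (forall v, inX v ->
         [/\ (forall w, adj v w -> exists x, c v w = inl x),
             (forall w w', adj v w -> adj v w' -> c v w = c v w' -> w = w') &
             (forall x, exists2 w, adj v w & c v w = inl x)]),
      (forall v, ~~ inX v ->
         [/\ (forall w, adj v w -> exists y, c v w = inr y),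
             (forall w w', adj v w -> adj v w' -> c v w = c v w' -> w = w') &
             (forall y, exists2 w, adj v w & c v w = inr y)]) &
      (forall v u u', adj u v -> adj u' v -> c u v = c u' v)].

Definition tree_aut (V : Type) (adj : V -> V -> Prop) (g : V -> V) : Prop :=
  bijective g /\ (forall u v, adj u v <-> adj (g u) (g v)).

(* U_c(M,N): automorphisms g with g V_X = V_X whose local action
   c|A(gv) ∘ g|A(v) ∘ (c|A(v))^-1 lies in M for v ∈ V_X and in N for v ∈ V_Y. *)
Definition U_c (X Y V : Type) (adj : V -> V -> Prop) (inX : V -> bool)
  (c : V -> V -> X + Y) (M : set (X -> X)) (N : set (Y -> Y)) : set (V -> V) :=
  [set g | [/\ tree_aut adj g,
      (forall v, inX (g v) = inX v),
      (forall v, inX v -> exists2 m, M m &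
          forall w x, adj v w -> c v w = inl x -> c (g v) (g w) = inl (m x)) &
      (forall v, ~~ inX v -> exists2 n, N n &
          forall w y, adj v w -> c v w = inr y -> c (g v) (g w) = inr (n y))]].

Definition VY (V : Type) (inX : V -> bool) := {v : V | ~~ inX v}.

Definition box_product (X Y V : Type) (adj : V -> V -> Prop) (inX : V -> bool)
  (c : V -> V -> X + Y) (M : set (X -> X)) (N : set (Y -> Y))
  : set (VY inX -> VY inX) :=
  [set h | exists2 g, U_c adj inX c M N g & forall v : VY inX, sval (h v) = g (sval v)].

Arguments legal_coloured_biregular_tree {X Y V} adj inX c.
Arguments U_c {X Y V} adj inX c M N.
Arguments box_product {X Y V} adj inX c M N.

(* Main.v *)
Require Import Defs.
From mathcomp Require Import all_boot.
From mathcomp Require Import boolp classical_sets functions cardinality.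
Set Implicit Arguments. Unset Strict Implicit. Unset Printing Implicit Defensive.
Local Open Scope classical_set_scope.
Local Open Scope card_scope.

Section Walks.
Variables (V : Type) (adj : V -> V -> Prop).

Lemma is_walk_cat (s : seq V) x t : is_walk adj (rcons s x) -> is_walk adj (x :: t) ->
  is_walk adj (s ++ x :: t).
Proof.
elim: s => [|a s IH] //=.
case: s IH => [|b s] IH /=; first by move=> [H1 _] H2; split.
by move=> [H1 H3] H2; split => //; exact: IH.
Qed.

Lemma nb_cat (s : seq V) (x : V) t : no_backtrack (rcons s x) -> no_backtrack (x :: t) ->
  (s = [::] \/ t = [::] \/ last x s <> head x t) ->
  no_backtrack (s ++ x :: t).
Proof.
elim: s => [|a s IH] //=.
case: s IH => [|b s] IH /=.
  move=> _ H2 J; clear IH; case: t H2 J => [|y t] //= H2 J.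
  by split => //; case: J => [//|[//|]].
case: s IH => [|d s] IH /=.
  move=> [H1 _] H2 J; split => //.
  by apply: IH => //; case: J => [//|[->|]]; [right; left|right;right].
move=> [H1 H3] H2 J; split => //.
by apply: IH => //; case: J => [//|[->|]]; [right; left|right;right].
Qed.

End Walks.

Section Tree.
Variables (X Y : countType) (V : Type) (adj : V -> V -> Prop) (inX : V -> bool)
  (c : V -> V -> X + Y).
Hypothesis Hleg : legal_coloured_biregular_tree adj inX c.

Let legE : [/\ [/\ (exists v : V, True),
      (forall u v, adj u v -> adj v u),
      (forall u, ~ adj u u),
      (forall u v, exists p : seq V, is_walk adj (u :: p) /\ last u p = v) &
      (forall (u : V) (p : seq V), is_walk adj (u :: p) -> no_backtrack (u :: p) ->
          last u p = u -> p = [::])],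
      (forall u v, adj u v -> inX u <> inX v),
      (forall v, inX v ->
         [/\ (forall w, adj v w -> exists x, c v w = inl x),
             (forall w w', adj v w -> adj v w' -> c v w = c v w' -> w = w') &
             (forall x, exists2 w, adj v w & c v w = inl x)]),
      (forall v, ~~ inX v ->
         [/\ (forall w, adj v w -> exists y, c v w = inr y),
             (forall w w', adj v w -> adj v w' -> c v w = c v w' -> w = w') &
             (forall y, exists2 w, adj v w & c v w = inr y)]) &
      (forall v u u', adj u v -> adj u' v -> c u v = c u' v)] := Hleg.

Lemma adj_sym u v : adj u v -> adj v u.
Proof. by case: legE => -[] _ H _ _ _ _ _ _ _; apply: H. Qed.
Lemma adj_bip u v : adj u v -> inX u <> inX v.
Proof. by case: legE => _ H _ _ _; apply: H. Qed.
Lemma colX v w : inX v -> adj v w -> exists x, c v w = inl x.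
Proof. by case: legE => _ _ H _ _ /H [] H1 _ _ /H1. Qed.
Lemma colY v w : ~~ inX v -> adj v w -> exists y, c v w = inr y.
Proof. by case: legE => _ _ _ H _ /H [] H1 _ _ /H1. Qed.
Lemma col_inj v w w' : adj v w -> adj v w' -> c v w = c v w' -> w = w'.
Proof.
case: legE => _ _ HX HY _; case: (boolP (inX v)) => [/HX|/HY] [] _ H _; exact: H.
Qed.
Lemma nbrX v x : inX v -> exists2 w, adj v w & c v w = inl x.
Proof. by case: legE => _ _ H _ _ /H [] _ _. Qed.
Lemma nbrY v y : ~~ inX v -> exists2 w, adj v w & c v w = inr y.
Proof. by case: legE => _ _ _ H _ /H [] _ _. Qed.
Lemma col_const v u u' : adj u v -> adj u' v -> c u v = c u' v.
Proof. by case: legE => _ _ _ _ H; apply: H. Qed.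
Lemma tree_cyc u p : is_walk adj (u :: p) -> no_backtrack (u :: p) ->
  last u p = u -> p = [::].
Proof. by case: legE => -[] _ _ _ _ H _ _ _ _; apply: H. Qed.
Lemma tree_conn u v : exists p, is_walk adj (u :: p) /\ last u p = v.
Proof. by case: legE => -[] _ _ _ H _ _ _ _ _; apply: H. Qed.
Lemma tree_ne : exists v : V, True.
Proof. by case: legE => -[]. Qed.

Definition isl (a : X + Y) : bool := if a is inl _ then true else false.

Lemma col_side v w : adj v w -> isl (c v w) = inX v.
Proof.
move=> H; case: (boolP (inX v)) => Hv.
  by have [x ->] := colX Hv H.
by have [y ->] := colY Hv H.
Qed.

Definition nbr (u : V) (a : X + Y) : V :=
  match pselect (exists w, adj u w /\ c u w = a) with
  | left H => projT1 (cid H)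
  | right _ => u end.

Lemma nbrP u a : (exists w, adj u w /\ c u w = a) ->
  adj u (nbr u a) /\ c u (nbr u a) = a.
Proof. by rewrite /nbr; case: pselect => // H _; case: (cid H). Qed.

Variable v0 : V.
Hypothesis v0X : inX v0.
Variable lam0 : X + Y.
Hypothesis lam0P : forall u, adj u v0 -> c u v0 = lam0.

Fixpoint follow (r : seq (X + Y)) : V :=
  if r is a :: r' then nbr (follow r') a else v0.
Definition lab (r : seq (X + Y)) := if r is a :: _ then a else lam0.
Fixpoint red (r : seq (X + Y)) : Prop :=
  match r with
  | [::] => True
  | a :: r' => [/\ red r', isl a = ~~ odd (size r') &
                 (if r' is _ :: r'' then a <> lab r'' else True)]
  end.

Lemma ex_nbr u a : isl a = inX u -> exists w, adj u w /\ c u w = a.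
Proof.
case: a => [x|y] /= H.
  by have [w ? ?] := nbrX x (esym H); exists w.
have Hu : ~~ inX u by rewrite -H.
by have [w ? ?] := nbrY y Hu; exists w.
Qed.

Lemma red_side r : red r -> inX (follow r) = ~~ odd (size r).
Proof.
elim: r => [|a r IH] /=; first by rewrite v0X.
case=> Hr Ha _; have Hs := IH Hr.
have Hi : isl a = inX (follow r) by rewrite Ha Hs.
have [Hadj _] := nbrP (ex_nbr Hi).
have := adj_bip Hadj; rewrite Hs.
by case: (odd (size r)); case: (inX _).
Qed.

Lemma follow_adj a r : red (a :: r) ->
  adj (follow r) (follow (a :: r)) /\ c (follow r) (follow (a :: r)) = a.
Proof.
move=> [Hr Ha _] /=; apply: nbrP; apply: ex_nbr.
by rewrite Ha red_side.
Qed.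

Lemma lab_in r : red r -> forall z, adj z (follow r) -> c z (follow r) = lab r.
Proof.
case: r => [|a r] /=; first by move=> _ z; apply: lam0P.
move=> Hr z Hz; have [H1 H2] := follow_adj Hr.
by rewrite -[in RHS]H2; apply: col_const.
Qed.

Lemma red_cons a r : red (a :: r) -> red r. Proof. by case. Qed.

Lemma follow_nb a b r : red (a :: b :: r) -> follow (a :: b :: r) <> follow r.
Proof.
move=> H E.
have [H1 H2] := follow_adj H.
have [H3 _] := follow_adj (red_cons H).
have H4 := lab_in (red_cons (red_cons H)) (adj_sym H3).
move: H => [_ _ Hne]; apply: Hne.
by rewrite -H2 -H4 E.
Qed.

Fixpoint RV r := if r is a :: r' then follow r :: RV r' else [:: v0].
Fixpoint F r := if r is a :: r' then rcons (F r') (follow r) else [:: v0].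

Lemma RV_head r : exists t, RV r = follow r :: t.
Proof. by case: r => [|a r] /=; eexists. Qed.

Lemma last_RV r d : last d (RV r) = v0.
Proof. by elim: r d => [|a r IH] d //=. Qed.

Lemma last_F r d : last d (F r) = follow r.
Proof. by case: r => [|a r] //=; rewrite last_rcons. Qed.

Lemma F_head r : exists t, F r = v0 :: t.
Proof.
elim: r => [|a r [t IH]] /=; first by eexists.
by rewrite IH rcons_cons; eexists.
Qed.

Lemma RV_walk r : red r -> is_walk adj (RV r) /\ no_backtrack (RV r).
Proof.
elim: r => [|a r IH] //= Hr.
have [H1 H2] := IH (red_cons Hr).
have [Ha _] := follow_adj Hr.
have [t Ht] := RV_head r.
move: H1 H2; rewrite Ht => H1 H2 /=; split; first by split => //; apply: adj_sym.
move: H2; clear IH Ha H1; case: r Hr Ht => [|b r] Hr Ht H2 /=; first by case: t Ht H2 => [|? ?].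
have [t' Ht'] := RV_head r.
move: Ht H2; rewrite /= Ht' => -[<-] H2; split => //.
exact: follow_nb.
Qed.

Lemma F_walk r : red r -> is_walk adj (F r) /\ no_backtrack (F r).
Proof.
elim: r => [|a r IH] //= Hr.
have [H1 H2] := IH (red_cons Hr).
have [Ha _] := follow_adj Hr.
clear IH; case: r Hr H1 H2 Ha => [|b r] Hr H1 H2 Ha; first by split.
rewrite [F (b :: r)]/= in H1 H2 *.
rewrite -!cats1 -catA /=; split.
  by apply: is_walk_cat => //=; split.
apply: nb_cat => //; right; right; rewrite last_F /=.
exact/nesym/follow_nb.
Qed.

Lemma follow_inj r r' : red r -> red r' -> follow r = follow r' -> r = r'.
Proof.
have Hc : forall a s, red (a :: s) -> v0 = follow (a :: s) -> False.
  move=> a s Hs E.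
  have [W B] := RV_walk Hs.
  have [t Ht] := RV_head s.
  have W' : is_walk adj (v0 :: RV s) by rewrite E; exact: W.
  have B' : no_backtrack (v0 :: RV s) by rewrite E; exact: B.
  have := tree_cyc W' B' (last_RV s v0).
  by rewrite Ht.
elim: r r' => [|a s IH] [|a' s'] //.
- by move=> _ Hr' E; case: (Hc _ _ Hr' E).
- by move=> Hr _ E; case: (Hc _ _ Hr (esym E)).
move=> Hr Hr' E.
case: (pselect (follow s = follow s')) => Hp.
  have [_ C1] := follow_adj Hr.
  have [_ C2] := follow_adj Hr'.
  rewrite E Hp C2 in C1; rewrite C1; congr (_ :: _).
  exact: IH (red_cons Hr) (red_cons Hr') Hp.
exfalso.
have [P HP] := F_head s.
have [W1 B1] := F_walk Hr.
have [W2 B2] := RV_walk Hr'.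
have W2' : is_walk adj (follow (a :: s) :: RV s') by rewrite E; exact: W2.
have B2' : no_backtrack (follow (a :: s) :: RV s') by rewrite E; exact: B2.
have W := @is_walk_cat _ adj (F s) (follow (a :: s)) (RV s') W1 W2'.
have B := @nb_cat _ (F s) (follow (a :: s)) (RV s') B1 B2'.
rewrite HP /= in W B.
have LP : last v0 P = follow s by rewrite -(last_F s v0) HP.
have J : v0 :: P = [::] \/ RV s' = [::] \/
         last v0 P <> head (follow (a :: s)) (RV s').
  right; right; rewrite LP.
  have [t' ->] := RV_head s'.
  by move=> /= ?; apply: Hp.
have := tree_cyc W (B J).
by rewrite last_cat /= last_RV => /(_ erefl); case: P {HP W B J LP}.
Qed.

Lemma step r z : red r -> adj (follow r) z ->
  (exists b r'', r = b :: r'' /\ z = follow r'') \/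
  (red (c (follow r) z :: r) /\ follow (c (follow r) z :: r) = z).
Proof.
move=> Hr Hz.
have Hside : isl (c (follow r) z) = ~~ odd (size r) by rewrite col_side // red_side.
have Hfol : follow (c (follow r) z :: r) = z.
  have [H1 H2] := nbrP (ex_intro (fun w => adj (follow r) w /\ c (follow r) w = c (follow r) z) z (conj Hz erefl)).
  exact: col_inj H1 Hz H2.
case: r Hr Hz Hside Hfol => [|b r] Hr Hz Hside Hfol.
  by right; split.
case: (pselect (z = follow r)) => Hzr; first by left; exists b, r.
right; split => //; split => //.
move=> E; apply: Hzr.
have [H3 _] := follow_adj Hr.
have H4 := lab_in (red_cons Hr) (adj_sym H3).
apply: col_inj Hz (adj_sym H3) _.
by rewrite E H4.
Qed.

Lemma walk_word p u : is_walk adj (u :: p) -> (exists r, red r /\ follow r = u) ->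
  exists r, red r /\ follow r = last u p.
Proof.
elim: p u => [|z p IH] u //= [Huz Hw] [r [Hr Hru]].
apply: IH => //; subst u.
case: (step Hr Huz) => [[b [r'' [Er Ez]]]|[H1 H2]].
  by exists r''; subst; split => //; exact: red_cons Hr.
by exists (c (follow r) z :: r).
Qed.

Lemma word_ex v : exists r, red r /\ follow r = v.
Proof.
have [p [Hp <-]] := tree_conn v0 v.
by apply: walk_word Hp _; exists [::].
Qed.

Definition word v := projT1 (cid (word_ex v)).
Lemma word_red v : red (word v). Proof. by rewrite /word; case: cid => ? []. Qed.
Lemma word_fol v : follow (word v) = v. Proof. by rewrite /word; case: cid => ? []. Qed.
Lemma word_uniq r : red r -> word (follow r) = r.
Proof. by move=> Hr; apply: follow_inj => //; [exact: word_red | rewrite word_fol]. Qed.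

Lemma adj_word u v : adj u v ->
  word v = c u v :: word u \/ word u = c v u :: word v.
Proof.
move=> Huv.
have Hu : adj (follow (word u)) v by rewrite word_fol.
case: (step (word_red u) Hu) => [[b [r'' [E Ez]]]|[H1 H2]].
  right; have Hr := word_red u; rewrite E in Hr.
  have Hr'' := red_cons Hr.
  have Hw : word v = r'' by rewrite Ez word_uniq.
  rewrite E Hw; congr (_ :: _).
  have [_ C] := follow_adj Hr.
  by rewrite -E word_fol -Ez in C.
left; rewrite word_fol in H1 H2.
by rewrite -[in LHS]H2 word_uniq.
Qed.

Lemma lam0_inr : isl lam0 = false.
Proof.
case: (boolP (isl lam0)) => // Hl.
case: lam0 lam0P Hl => [x|//] HP _.
have [w Hw _] := nbrX x v0X.
have E1 := HP w (adj_sym Hw).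
have E2 := col_side (adj_sym Hw).
have E3 := adj_bip Hw; rewrite v0X in E3.
by rewrite E1 /= in E2; move: E3; rewrite -E2.
Qed.

Definition mapX (m : X -> X) (a : X + Y) : X + Y :=
  if a is inl x then inl (m x) else a.
Definition mp (m : X -> X) (f : bool) (a : X + Y) := if f then mapX m a else a.

Variable x0 : X.

Fixpoint fl (bb : nat -> bool) (r : seq (X + Y)) : bool :=
  if r is a :: r' then (if a == inl x0 then bb (size r')./2 else fl bb r') else false.
Fixpoint T (m : X -> X) (bb : nat -> bool) (r : seq (X + Y)) : seq (X + Y) :=
  if r is a :: r' then mp m (fl bb r') a :: T m bb r' else [::].

Section TProps.
Variables (m : X -> X) (bb : nat -> bool).
Hypothesis m_inj : injective m.
Hypothesis m_x0 : m x0 = x0.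

Lemma size_T r : size (T m bb r) = size r.
Proof. by elim: r => //= a r ->. Qed.

Lemma isl_mp f a : isl (mp m f a) = isl a.
Proof. by case: f; case: a. Qed.

Lemma mp_x0 f a : (mp m f a == inl x0) = (a == inl x0).
Proof.
case: f; case: a => //= x.
apply/eqP/eqP => [[E]|[->]]; last by rewrite m_x0.
by rewrite -m_x0 in E; rewrite (m_inj E).
Qed.

Lemma mp_inj f : injective (mp m f).
Proof. by case: f => //; case=> [x|y] [x'|y'] //= [E]; rewrite (m_inj E). Qed.

Lemma mp_inr f y : mp m f (inr y) = inr y. Proof. by case: f. Qed.

Lemma fl_T r : fl bb (T m bb r) = fl bb r.
Proof. by elim: r => //= a r IH; rewrite mp_x0 size_T IH. Qed.

Lemma red_T r : red r -> red (T m bb r).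
Proof.
elim: r => [|a r IH] //= [Hr Ha H3]; split; first exact: IH.
  by rewrite isl_mp size_T.
case: r Hr Ha H3 {IH} => [|b r] //= Hr Ha H3.
case: r Hr Ha H3 => [|d r] /= Hr Ha H3.
  case: a Ha H3 => //= y _; by rewrite mp_inr.
move: Hr => [[_ Hd _] Hb _].
case: a Ha H3 => [x|y] /= Ha H3; last first.
  case: d Hd H3 => [x'|y'] /= Hd H3; first by rewrite !negbK in Ha; rewrite -Ha in Hd.
  by rewrite !mp_inr.
case: b Hb => [x'|y'] /= Hb; first by rewrite !negbK in Ha Hb; rewrite -Hb in Ha.
case: (boolP (d == inl x0)) => Hd0.
  rewrite (eqP Hd0) in H3 *.
  move=> E; have : mp m (fl bb r) (inl x0) == inl x0 by rewrite mp_x0.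
  by rewrite -E mp_x0 => /eqP.
by move=> /mp_inj.
Qed.

Lemma T_inv mi r : cancel m mi -> T mi bb (T m bb r) = r.
Proof.
move=> K; have mi_x0 : mi x0 = x0 by rewrite -{1}m_x0 K.
elim: r => //= a r ->; rewrite fl_T; congr (_ :: _).
by case: (fl bb r) => //; case: a => //= x; rewrite K.
Qed.

End TProps.

Section Auto.
Variables (m mi : X -> X).
Hypotheses (K1 : cancel m mi) (K2 : cancel mi m) (m_x0 : m x0 = x0).
Let m_inj : injective m := can_inj K1.
Let mi_inj : injective mi := can_inj K2.
Let mi_x0 : mi x0 = x0. Proof. by rewrite -{1}m_x0 K1. Qed.

Definition gA bb v := follow (T m bb (word v)).
Definition gB bb v := follow (T mi bb (word v)).

Lemma red_Tw bb v : red (T m bb (word v)).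
Proof. by apply: red_T => //; apply: word_red. Qed.
Lemma red_Twi bb v : red (T mi bb (word v)).
Proof. by apply: red_T => //; apply: word_red. Qed.

Lemma word_gA bb v : word (gA bb v) = T m bb (word v).
Proof. by rewrite word_uniq //; apply: red_Tw. Qed.

Lemma gA_bij bb : bijective (gA bb).
Proof.
exists (gB bb) => v; rewrite /gB /gA.
  by rewrite word_uniq ?T_inv ?word_fol //; apply: red_Tw.
by rewrite word_uniq ?T_inv ?word_fol //; apply: red_Twi.
Qed.

Lemma gA_side bb v : inX (gA bb v) = inX v.
Proof.
rewrite /gA red_side; last exact: red_Tw.
by rewrite size_T -{2}(word_fol v) red_side //; exact: word_red.
Qed.

Lemma gA_adj bb u v : adj u v <-> adj (gA bb u) (gA bb v).
Proof.
split.
  move=> /adj_word [E|E].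
    have Hr := red_Tw bb v; rewrite E in Hr.
    have [H _] := follow_adj Hr.
    by rewrite /gA E.
  have Hr := red_Tw bb u; rewrite E in Hr.
  have [H _] := follow_adj Hr.
  by rewrite /gA E; apply: adj_sym.
move=> /adj_word; rewrite !word_gA => -[E|E].
  case Ev: (word v) E => [|a s] //= [_ Es].
  have Hs : s = word u.
    by rewrite -(T_inv bb m_inj m_x0 s K1) Es T_inv.
  have Hr := word_red v; rewrite Ev Hs in Hr.
  have [H _] := follow_adj Hr.
  by rewrite word_fol -Hs -Ev word_fol in H.
case Eu: (word u) E => [|a s] //= [_ Es].
have Hs : s = word v.
  by rewrite -(T_inv bb m_inj m_x0 s K1) Es T_inv.
have Hr := word_red u; rewrite Eu Hs in Hr.
have [H _] := follow_adj Hr.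
by rewrite word_fol -Hs -Eu word_fol in H; apply: adj_sym.
Qed.

Lemma gA_locX bb v z x : inX v -> adj v z -> c v z = inl x ->
  c (gA bb v) (gA bb z) = inl ((if fl bb (word v) then m else id) x).
Proof.
move=> Hv Hz Hc; case: (adj_word Hz) => E.
  have Hr := red_Tw bb z; rewrite E in Hr.
  have [_ C] := follow_adj Hr.
  rewrite /gA E; transitivity (mp m (fl bb (word v)) (c v z)); first exact: C.
  by rewrite Hc; case: (fl bb _).
have L1 : c v z = lab (word z).
  by have := @lab_in (word z) (word_red z) v; rewrite word_fol; apply.
have Hgz : adj (gA bb v) (follow (T m bb (word z))) by have /(gA_adj bb) := Hz.
have L2 := lab_in (red_Tw bb z) Hgz.
rewrite /gA -/(gA bb z) in L2 *; rewrite /gA in Hgz L2 *.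
rewrite L2.
have Hzs : isl (c z v) = false.
  rewrite col_side; last exact: adj_sym.
  by have := adj_bip Hz; rewrite Hv; case: (inX z).
rewrite E /=.
have -> : (c z v == inl x0) = false by case: (c z v) Hzs.
rewrite Hc in L1.
case: (word z) L1 => [|d w'] /= L1.
  by move: lam0_inr; rewrite -L1.
rewrite -L1.
case: (boolP (x == x0)) => [/eqP ->|Hx].
  by rewrite eqxx; case: (bb _); case: (fl bb w') => /=; rewrite ?m_x0.
have -> : (inl x == inl x0 :> X + Y) = false by apply/negbTE; apply: contra Hx => /eqP [->].
by case: (fl bb w').
Qed.

Lemma gA_locY bb v z y : ~~ inX v -> adj v z -> c v z = inr y ->
  c (gA bb v) (gA bb z) = inr y.
Proof.
move=> Hv Hz Hc; case: (adj_word Hz) => E.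
  have Hr := red_Tw bb z; rewrite E in Hr.
  have [_ C] := follow_adj Hr.
  rewrite /gA E; transitivity (mp m (fl bb (word v)) (c v z)); first exact: C.
  by rewrite Hc mp_inr.
have L1 : c v z = lab (word z).
  by have := @lab_in (word z) (word_red z) v; rewrite word_fol; apply.
have Hgz : adj (gA bb v) (follow (T m bb (word z))) by have /(gA_adj bb) := Hz.
have L2 := lab_in (red_Tw bb z) Hgz.
rewrite /gA in Hgz L2 *; rewrite L2.
rewrite Hc in L1.
case: (word z) L1 => [|d w'] /= L1 //.
by rewrite -L1 mp_inr.
Qed.

Lemma gA_U bb (M : set (X -> X)) (N : set (Y -> Y)) :
  M m -> M id -> N id -> U_c adj inX c M N (gA bb).
Proof.
move=> Mm Mid Nid; split.
- by split; [exact: gA_bij | move=> u v; exact: gA_adj].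
- exact: gA_side.
- move=> v Hv; exists (if fl bb (word v) then m else id); first by case: (fl bb _).
  by move=> w x Hw Hc; apply: gA_locX.
- move=> v Hv; exists id => // w y Hw Hc; exact: gA_locY.
Qed.

End Auto.

Section Distinct.
Variables (m mi : X -> X) (x1 : X) (y1 y2 : Y).
Hypotheses (K1 : cancel m mi) (K2 : cancel mi m) (m_x0 : m x0 = x0).
Hypotheses (m_x1 : m x1 <> x1) (y12 : y1 <> y2).
Let m_inj : injective m := can_inj K1.

Lemma x1_x0 : x1 <> x0.
Proof. by move=> E; apply: m_x1; rewrite E m_x0. Qed.
Lemma mx1_x0 : m x1 <> x0.
Proof. by move=> E; apply: x1_x0; apply: m_inj; rewrite E m_x0. Qed.

Lemma pickX (l : X + Y) : exists x, x <> x0 /\ inl x <> l.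
Proof.
case: (pselect (inl x1 = l)) => H; last by exists x1; split => //; exact: x1_x0.
exists (m x1); split; first exact: mx1_x0.
by rewrite -H => -[]; exact: m_x1.
Qed.

Lemma pickY (l : X + Y) : exists y, inr y <> l.
Proof.
case: (pselect (inr y1 = l)) => H; last by exists y1.
by exists y2; rewrite -H => -[] /esym.
Qed.

Lemma ex_red_even j : exists s, [/\ red s, size s = j.*2 &
  forall b d s'', s = b :: d :: s'' -> d <> inl x0].
Proof.
elim: j => [|j [s [Hs Hsz Hd]]]; first by exists [::].
have [x [Hx0 Hxl]] := pickX (if s is _ :: s' then lab s' else lam0).
have [y Hy] := pickY (lab s).
exists (inr y :: inl x :: s); split => //.
- split; last by [].
  + split => //; first by rewrite Hsz odd_double.
    by case: s {Hs Hsz Hd Hy} Hxl.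
  + by rewrite /= Hsz odd_double.
- by rewrite /= Hsz doubleS.
- by move=> b d s'' [_ <- _] [].
Qed.

Lemma diff_T j (bb bb' : nat -> bool) : bb j <> bb' j ->
  exists r1 r2, [/\ red r1, red r2, ~~ odd (size r1), odd (size r2) &
    (T m bb r1 <> T m bb' r1 /\ T m bb r2 <> T m bb' r2)].
Proof.
move=> Hj.
have [s [Hs Hsz Hd]] := ex_red_even j.
have [y Hy] := pickY (lab s).
have [y' Hy'] := pickY (inr y).
have R0 : red (inl x0 :: s).
  split => //; first by rewrite Hsz odd_double.
  case: s Hs Hsz Hd {Hy} => [|b [|d s'']] //=.
    by move=> _ /(congr1 odd); rewrite odd_double.
  by move=> _ _ /(_ b d s'' erefl) /nesym.
have R1 : red (inr y :: inl x0 :: s) by split => //=; rewrite Hsz odd_double.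
have R2 : red (inl x1 :: inr y :: inl x0 :: s).
  by split => //=; [rewrite Hsz odd_double | move=> [] /x1_x0].
have R3 : red (inr y' :: inl x1 :: inr y :: inl x0 :: s).
  by split => //=; rewrite Hsz odd_double.
have HT : T m bb (inl x1 :: inr y :: inl x0 :: s) <>
          T m bb' (inl x1 :: inr y :: inl x0 :: s).
  rewrite /= eqxx Hsz doubleK => -[] E _ _ _.
  move: Hj E; case: (bb j); case: (bb' j) => //= _ [] E.
    exact: m_x1 E.
  exact: m_x1 (esym E).
exists (inr y' :: inl x1 :: inr y :: inl x0 :: s), (inl x1 :: inr y :: inl x0 :: s).
split => //.
- by rewrite /= Hsz odd_double.
- by rewrite /= Hsz odd_double.
- by split => // /(congr1 behead).
Qed.

Lemma gA_diff (bb bb' : nat -> bool) : bb <> bb' ->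
  (exists v, inX v /\ gA m bb v <> gA m bb' v) /\
  (exists v, ~~ inX v /\ gA m bb v <> gA m bb' v).
Proof.
move=> Hbb.
have [j Hj] : exists j, bb j <> bb' j.
  apply: contrapT => H; apply: Hbb; apply: funext => j.
  by apply: contrapT => Hj; apply: H; exists j.
have [r1 [r2 [H1 H2 P1 P2 [D1 D2]]]] := diff_T Hj.
have key : forall r, red r -> T m bb r <> T m bb' r -> gA m bb (follow r) <> gA m bb' (follow r).
  move=> r Hr D E; apply: D; rewrite /gA word_uniq // in E.
  by apply: follow_inj E; apply: red_T.
split.
  by exists (follow r1); split; [rewrite red_side | exact: key].
by exists (follow r2); split; [rewrite red_side // P2 | exact: key].
Qed.

End Distinct.

End Tree.

Section Global.
Variables (X Y : countType) (V : Type) (adj : V -> V -> Prop) (inX : V -> bool)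
  (c : V -> V -> X + Y).
Hypothesis Hleg : legal_coloured_biregular_tree adj inX c.

Lemma base_ex (x : X) (y : Y) :
  exists2 v0, inX v0 & exists lam0, forall u, adj u v0 -> c u v0 = lam0.
Proof.
have [v0 v0X] : exists2 v0, inX v0 & True.
  have [v _] := tree_ne Hleg.
  case: (boolP (inX v)) => Hv; first by exists v.
  have [w Hw _] := nbrY Hleg y Hv.
  exists w => //; have := adj_bip Hleg Hw.
  by move: Hv; case: (inX v); case: (inX w).
exists v0 => //.
have [u Hu _] := nbrX Hleg x v0X.
exists (c u v0) => u' Hu'.
have Hu2 := adj_sym Hleg Hu.
exact: (col_const Hleg Hu' Hu2).
Qed.

Lemma construct (M : set (X -> X)) (N : set (Y -> Y)) (m : X -> X) (x0 x1 : X) (y1 y2 : Y) :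
  bijective m -> m x0 = x0 -> m x1 <> x1 -> y1 <> y2 -> M m -> M id -> N id ->
  exists G : (nat -> bool) -> V -> V, (forall bb, U_c adj inX c M N (G bb)) /\
    forall bb bb', bb <> bb' ->
      (exists v, inX v /\ G bb v <> G bb' v) /\ (exists v, ~~ inX v /\ G bb v <> G bb' v).
Proof.
move=> [mi K1 K2] Hx0 Hx1 Hy Mm Mid Nid.
have [v0 v0X [lam0 lam0P]] := base_ex x0 y1.
exists (gA Hleg v0X lam0P x0 m); split.
  by move=> bb; apply: gA_U.
move=> bb bb' Hbb.
have H := gA_diff Hleg v0X lam0P K1 Hx0 Hx1 Hy Hbb.
exact H.
Qed.

Lemma V_enc (x : X) (y : Y) : exists f : V -> nat, injective f.
Proof.
have [v0 v0X [lam0 lam0P]] := base_ex x y.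
exists (fun v => pickle (word Hleg v0X lam0P v)) => v v' /(pcan_inj pickleK) E.
by rewrite -(word_fol Hleg v0X lam0P v) E word_fol.
Qed.

Section Semi.
Variables (M : set (X -> X)) (N : set (Y -> Y)).
Hypotheses (HM : perm_group M) (HN : perm_group N).
Hypotheses (SM : semiregular M) (SN : semiregular N).

Lemma semi_eqX (m m' : X -> X) x : M m -> M m' -> m x = m' x -> m = m'.
Proof.
move: HM => [Hb _ Hc Hi] Mm Mm' E.
have [mi K1 K2] := Hb _ Mm'.
have Mmi := Hi _ _ Mm' K1 K2.
have Hfix : (mi \o m) x = x by rewrite /= E K1.
have H := SM (Hc _ _ Mmi Mm) Hfix.
apply: funext => z.
by rewrite -[m z]K2; have := congr1 (fun f => f z) H => /= ->.
Qed.

Lemma semi_eqY (m m' : Y -> Y) x : N m -> N m' -> m x = m' x -> m = m'.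
Proof.
move: HN => [Hb _ Hc Hi] Mm Mm' E.
have [mi K1 K2] := Hb _ Mm'.
have Mmi := Hi _ _ Mm' K1 K2.
have Hfix : (mi \o m) x = x by rewrite /= E K1.
have H := SN (Hc _ _ Mmi Mm) Hfix.
apply: funext => z.
by rewrite -[m z]K2; have := congr1 (fun f => f z) H => /= ->.
Qed.

Variables (g g' : V -> V).
Hypotheses (Hg : U_c adj inX c M N g) (Hg' : U_c adj inX c M N g').

Lemma nb_agree a b : adj a b -> g a = g' a -> g b = g' b ->
  forall z, adj a z -> g z = g' z.
Proof.
move=> Hab Ea Eb z Hz.
move: Hg Hg'; rewrite /U_c /tree_aut /= => [[[_ Ag] Sg LXg LYg] [[_ Ag'] Sg' LXg' LYg']].
have Hgz : adj (g a) (g z) by apply/(Ag a z).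
have Hgz' : adj (g a) (g' z) by rewrite Ea; apply/(Ag' a z).
apply: (col_inj Hleg Hgz Hgz').
case: (boolP (inX a)) => Ha.
  have [m Mm Lm] := LXg a Ha.
  have [m' Mm' Lm'] := LXg' a Ha.
  have [x Ex] := colX Hleg Ha Hab.
  have Emm : m = m'.
    apply: (semi_eqX (x := x)) => //.
    have := Lm b x Hab Ex; rewrite Ea Eb (Lm' b x Hab Ex).
    by case.
  have [x' Ex'] := colX Hleg Ha Hz.
  by rewrite (Lm z x' Hz Ex') Ea (Lm' z x' Hz Ex') Emm.
have [m Mm Lm] := LYg a Ha.
have [m' Mm' Lm'] := LYg' a Ha.
have [x Ex] := colY Hleg Ha Hab.
have Emm : m = m'.
  apply: (semi_eqY (x := x)) => //.
  have := Lm b x Hab Ex; rewrite Ea Eb (Lm' b x Hab Ex).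
  by case.
have [x' Ex'] := colY Hleg Ha Hz.
by rewrite (Lm z x' Hz Ex') Ea (Lm' z x' Hz Ex') Emm.
Qed.

Lemma agree_all v0 w0 : adj v0 w0 -> g v0 = g' v0 -> g w0 = g' w0 ->
  forall v, g v = g' v.
Proof.
move=> H0 E0 E1 v.
have [p [Hp <-]] := tree_conn Hleg v0 v.
suff : exists b, [/\ adj (last v0 p) b, g (last v0 p) = g' (last v0 p) & g b = g' b].
  by case=> b [].
elim: p v0 w0 H0 E0 E1 Hp => [|z p IH] u w Huw Eu Ew /=; first by exists w.
move=> [Huz Hw].
have Ez := nb_agree Huw Eu Ew Huz.
exact: IH (adj_sym Hleg Huz) Ez Eu Hw.
Qed.

End Semi.

End Global.

Definition swapc {A B : Type} (s : A + B) : B + A :=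
  match s with inl x => inr x | inr y => inl y end.

Lemma swapc_inj {A B : Type} : injective (@swapc A B).
Proof. by case=> [a|b] [a'|b'] //= [->]. Qed.

Lemma legal_swap (X Y : countType) (V : Type) (adj : V -> V -> Prop) (inX : V -> bool)
  (c : V -> V -> X + Y) :
  legal_coloured_biregular_tree adj inX c ->
  legal_coloured_biregular_tree adj (fun v => ~~ inX v) (fun u v => swapc (c u v)).
Proof.
rewrite /legal_coloured_biregular_tree => -[T B HX HY C]; split => //.
- by move=> u v /B; case: (inX u); case: (inX v).
- move=> v /HY [H1 H2 H3]; split.
  + by move=> w /H1 [y ->]; exists y.
  + by move=> w w' Hw Hw' /swapc_inj; apply: H2.
  + by move=> y; have [w ? E] := H3 y; exists w; rewrite // E.
- move=> v; rewrite negbK => /HX [H1 H2 H3]; split.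
  + by move=> w /H1 [y ->]; exists y.
  + by move=> w w' Hw Hw' /swapc_inj; apply: H2.
  + by move=> y; have [w ? E] := H3 y; exists w; rewrite // E.
- by move=> v u u' Hu Hu'; rewrite (C v u u').
Qed.

Lemma U_swap (X Y : countType) (V : Type) (adj : V -> V -> Prop) (inX : V -> bool)
  (c : V -> V -> X + Y) (M : set (X -> X)) (N : set (Y -> Y)) g :
  U_c adj (fun v => ~~ inX v) (fun u v => swapc (c u v)) N M g -> U_c adj inX c M N g.
Proof.
rewrite /U_c /= => -[A S LX LY]; split => //.
- by move=> v; move: (S v); case: (inX v); case: (inX (g v)).
- move=> v Hv; have Hv' : ~~ ~~ inX v by rewrite negbK.
  have [m Mm Hm] := LY v Hv'.
  exists m => // w x Hw Hc; apply: swapc_inj => /=.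
  by apply: Hm => //; rewrite Hc.
- move=> v Hv; have [m Mm Hm] := LX v Hv.
  exists m => // w x Hw Hc; apply: swapc_inj => /=.
  by apply: Hm => //; rewrite Hc.
Qed.

Lemma not_semi (X : Type) (M : set (X -> X)) : ~ semiregular M ->
  exists m, [/\ M m, exists x0, m x0 = x0 & exists x1, m x1 <> x1].
Proof.
move=> nS; apply: contrapT => H; apply: nS => m Mm x Hx; apply: funext => y.
by apply: contrapT => Hy; apply: H; exists m; split => //; [exists x | exists y].
Qed.

Lemma cantor : ~ countable [set: nat -> bool].
Proof.
move=> /countable_injP [f finj].
pose g n : nat -> bool := match pselect (exists b, f b = n) with
  | left H => projT1 (cid H) | right _ => fun _ => true end.
have gK b : g (f b) = b.
  rewrite /g; case: pselect => [H|]; last by case; exists b.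
  by case: (cid H) => b' /= /finj; apply => //; rewrite inE.
pose d n := ~~ g n n.
have E := congr1 (fun h => h (f d)) (gK d).
have E' : d (f d) = ~~ g (f d) (f d) by [].
move: E; rewrite /= E'.
by case: (g (f d) (f d)).
Qed.

Section Card.
Variables (X Y : countType) (V : Type) (adj : V -> V -> Prop) (inX : V -> bool)
  (c : V -> V -> X + Y) (M : set (X -> X)) (N : set (Y -> Y)).

Lemma box_upper (f : V -> nat) : injective f ->
  box_product adj inX c M N #<= [set: nat -> bool].
Proof.
move=> finj; apply/pcard_injP.
exists (fun h n => `[< exists v : VY inX, pickle (f (sval v), f (sval (h v))) = n >]).
move=> h h' _ _ E; apply: funext => v; apply: val_inj.
have := congr1 (fun F => F (pickle (f (sval v), f (sval (h v))))) E => /=.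
have -> : `[< exists v0 : VY inX, pickle (f (sval v0), f (sval (h v0))) =
             pickle (f (sval v), f (sval (h v))) >] = true.
  by apply/asboolP; exists v.
move=> /esym /asboolP [v' /(pcan_inj pickleK) [/finj E1 /finj E2]].
have Ev : v' = v by apply: val_inj.
by rewrite -E2 Ev.
Qed.

Definition restrY (g : V -> V) (v : VY inX) : VY inX :=
  match pselect (~~ inX (g (sval v))) with
  | left H => exist _ (g (sval v)) H
  | right _ => v end.

Lemma restrY_val g : (forall v, inX (g v) = inX v) ->
  forall v, sval (restrY g v) = g (sval v).
Proof.
move=> Hs v; rewrite /restrY; case: pselect => // H; exfalso; apply: H.
by rewrite Hs; exact: (svalP v).
Qed.

Lemma box_lower (G : (nat -> bool) -> V -> V) :
  (forall bb, U_c adj inX c M N (G bb)) ->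
  (forall bb bb', bb <> bb' -> exists v, ~~ inX v /\ G bb v <> G bb' v) ->
  [set: nat -> bool] #<= box_product adj inX c M N.
Proof.
move=> HU HD.
have Hs bb : forall v, inX (G bb v) = inX v by case: (HU bb).
pose F bb := restrY (G bb).
have Finj : {in [set: nat -> bool] &, injective F}.
  move=> bb bb' _ _ E; apply: contrapT => Hne.
  have [v [Hv Hd]] := HD _ _ Hne; apply: Hd.
  have := congr1 (fun h => sval (h (exist (fun v => ~~ inX v) v Hv))) E.
  by rewrite /F /= !restrY_val.
have Hsub : F @` [set: nat -> bool] `<=` box_product adj inX c M N.
  by move=> h [bb _ <-]; exists (G bb) => // v; rewrite /F restrY_val.
apply: card_le_trans (subset_card_le Hsub).
have := card_esym (inj_card_eq Finj).
by move=> /card_eqPle [].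
Qed.

End Card.

Lemma box_countable (X Y : countType) (V : Type) (adj : V -> V -> Prop) (inX : V -> bool)
  (c : V -> V -> X + Y) (M : set (X -> X)) (N : set (Y -> Y)) :
  legal_coloured_biregular_tree adj inX c ->
  perm_group M -> perm_group N -> semiregular M -> semiregular N ->
  forall (f : V -> nat), injective f -> forall v0 w0, adj v0 w0 ->
  countable (box_product adj inX c M N).
Proof.
move=> Hleg HM HN SM SN f finj v0 w0 H0.
apply/countable_injP.
pose F h := match pselect (box_product adj inX c M N h) with
  | left H => let g := s2val (cid2 H) in pickle (f (g v0), f (g w0))
  | right _ => 0%N end.
exists F => h h'; rewrite !inE => Hh Hh'.
rewrite /F; case: pselect => // H; case: pselect => // H'.
case: (cid2 H) => g Ug Eg; case: (cid2 H') => g' Ug' Eg' /=.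
move=> /(pcan_inj pickleK) [/finj E0 /finj E1].
have Eall := agree_all Hleg HM HN SM SN Ug Ug' H0 E0 E1.
by apply: funext => v; apply: val_inj; rewrite /= Eg Eg' Eall.
Qed.

Theorem corollary6p5 (X Y : countType) (V : Type)
  (adj : V -> V -> Prop) (inX : V -> bool) (c : V -> V -> X + Y)
  (M : set (X -> X)) (N : set (Y -> Y)) :
  (exists x1 x2 : X, x1 <> x2) ->
  (exists y1 y2 : Y, y1 <> y2) ->
  legal_coloured_biregular_tree adj inX c ->
  perm_group M -> perm_closed M -> nontrivial_group M ->
  perm_group N -> perm_closed N -> nontrivial_group N ->
  (countable (box_product adj inX c M N) \/
   box_product adj inX c M N #= [set: nat -> bool]) /\
  (countable (box_product adj inX c M N) <-> semiregular M /\ semiregular N).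
Proof.
move=> [xa [xb Hx]] [ya [yb Hy]] Hleg HM _ _ HN _ _.
have [f finj] := V_enc Hleg xa ya.
have Up : box_product adj inX c M N #<= [set: nat -> bool] by apply: box_upper finj.
case: (pselect (semiregular M /\ semiregular N)) => [[SM SN]|nS].
  have [v0 _ _] := base_ex Hleg xa ya.
  have [w0 H0 _] : exists2 w0, adj v0 w0 & True.
    case: (boolP (inX v0)) => Hv.
      by have [w ? _] := nbrX Hleg xa Hv; exists w.
    by have [w ? _] := nbrY Hleg ya Hv; exists w.
  have cB := box_countable Hleg HM HN SM SN finj H0.
  by split; [left | split].
have Lo : [set: nat -> bool] #<= box_product adj inX c M N.
  case: (pselect (semiregular M)) => SM.
    have SN : ~ semiregular N by move=> SN; apply: nS.
    have [n [Nn [y0 Hy0] [y1 Hy1]]] := not_semi SN.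
    have [Hbn Nid _ _] := HN.
    have [_ Mid _ _] := HM.
    have [G [HG HD]] := construct (legal_swap Hleg) (Hbn _ Nn) Hy0 Hy1 Hx Nn Nid Mid.
    apply: (box_lower (G := G)).
      by move=> bb; apply: U_swap; apply: HG.
    by move=> bb bb' /HD [[v [Hv Hd]] _]; exists v.
  have [m [Mm [x0 Hx0] [x1 Hx1]]] := not_semi SM.
  have [Hbm Mid _ _] := HM.
  have [_ Nid _ _] := HN.
  have [G [HG HD]] := construct Hleg (Hbm _ Mm) Hx0 Hx1 Hy Mm Mid Nid.
  apply: (box_lower (G := G)) => //.
  by move=> bb bb' /HD [_ [v [Hv Hd]]]; exists v.
split.
  by right; apply: Cantor_Bernstein.
split => // cB; exfalso.
exact: cantor (card_le_trans Lo cB).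
Qed.
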